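(* Let $A$ be an $n\times n$ complex matrix with eigenvalues, multiplicities, $P_i$, $N_i$, $B(z)$ and $q_i$ as in the context. Then for each $i$, $$P_i=\frac{1}{(n_i-1)!}\frac{d^{n_i-1}}{dz^{n_i-1}}\left(\frac{B(z)}{q_i(z)}\right)\Big|_{z=\lambda_i},$$ and, if $n_i\ge 2$, $$N_iP_i=\frac{1}{(n_i-2)!}\frac{d^{n_i-2}}{dz^{n_i-2}}\left(\frac{B(z)}{q_i(z)}\right)\Big|_{z=\lambda_i}.$$
   Context: For an $n\times n$ complex matrix $A$ with distinct eigenvalues $\lambda_1,\dots,\lambda_m$ and algebraic multiplicities $n_1,\dots,n_m$, let $W_i=\ker(A-\lambda_i\mathbb{1})^{n_i}$ be the generalized eigenspace of $\lambda_i$, so $\mathbb{C}^n=\bigoplus_i W_i$. Let $P_i$ be the projection onto $W_i$ along $\bigoplus_{j\ne i}W_j$, and let $N_i=(A-\lambda_i\mathbb{1})P_i$. Let $p(z)=\det(z\mathbb{1}-A)=\prod_{j}(z-\lambda_j)^{n_j}$, $B(z)=\operatorname{Adj}(z\mathbb{1}-A)$ (adjugate matrix), and $q_i(z)=\prod_{j\ne i}(z-\lambda_j)^{n_j}$, which is nonzero near $\lambda_i$ so $B(z)/q_i(z)$ is analytic near $\lambda_i$. *)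

(* Defs.v *)
From HB Require Import structures.
From mathcomp Require Import all_boot all_order all_algebra.
From mathcomp Require Import complex.
From mathcomp Require Import reals.
Set Implicit Arguments. Unset Strict Implicit. Unset Printing Implicit Defensive.
Import Order.TTheory GRing.Theory Num.Theory.
Local Open Scope ring_scope.

(* One step of the quotient rule on a matrix-valued rational function
   F.1 / F.2 (numerator matrix of polynomials, scalar polynomial denominator):
   (M / q)' = (q M' - q' M) / q^2. *)
Definition rat_mx_deriv (C : fieldType) (n : nat)
    (F : 'M[{poly C}]_n * {poly C}) : 'M[{poly C}]_n * {poly C} :=
  (F.2 *: map_mx (fun p => p^`()) F.1 - F.2^`() *: F.1, F.2 ^+ 2).

(* k-th derivative of z |-> M(z) / q(z), evaluated at z = x (meaningful when q.[x] != 0). *)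
Definition rat_mx_derivn_at (C : fieldType) (n : nat) (k : nat)
    (M : 'M[{poly C}]_n) (q : {poly C}) (x : C) : 'M[C]_n :=
  let F := iter k (@rat_mx_deriv C n) (M, q) in
  (F.2.[x])^-1 *: map_mx (fun p => p.[x]) F.1.

Definition in_ker_pow (C : fieldType) (n : nat) (A : 'M[C]_n) (lam : C) (k : nat)
    (v : 'cV[C]_n) : Prop :=
  (A - lam%:M) ^+ k *m v = 0.

(* P is the projection onto W_i along the sum of the W_j, j <> i *)
Definition is_spectral_proj (C : fieldType) (n m : nat) (A : 'M[C]_n)
    (lam : 'I_m -> C) (ns : 'I_m -> nat) (i : 'I_m) (P : 'M[C]_n) : Prop :=
  (forall v, in_ker_pow A (lam i) (ns i) v -> P *m v = v) /\
  (forall j v, j != i -> in_ker_pow A (lam j) (ns j) v -> P *m v = 0).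

(* Main.v *)
Require Import Defs.
From HB Require Import structures.
From mathcomp Require Import all_boot all_order all_algebra.
From mathcomp Require Import complex reals.
From mathcomp Require Import ring zify.
Import Order.TTheory GRing.Theory Num.Theory.
Set Implicit Arguments. Unset Strict Implicit.
Local Open Scope ring_scope.

Section Scalar.
Variable C : fieldType.
Implicit Types (m q : {poly C}) (x : C).

Definition dsc (F : {poly C} * {poly C}) : {poly C} * {poly C} :=
  (F.2 * F.1^`() - F.2^`() * F.1, F.2 ^+ 2).

Definition Vk k m q x := let F := iter k dsc (m, q) in (F.2.[x])^-1 * F.1.[x].

Lemma dsc_iter2 k m1 m2 q : (iter k dsc (m1, q)).2 = (iter k dsc (m2, q)).2.
Proof. by elim: k => //= k ->. Qed.

Lemma dsc_iterD k m1 m2 q : iter k dsc (m1 + m2, q) =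
  ((iter k dsc (m1, q)).1 + (iter k dsc (m2, q)).1, (iter k dsc (m1, q)).2).
Proof.
elim: k => //= k ->; rewrite /dsc /= (dsc_iter2 k m2 m1); congr (_, _).
rewrite derivD; ring.
Qed.

Lemma Vk_add k m1 m2 q x : Vk k (m1 + m2) q x = Vk k m1 q x + Vk k m2 q x.
Proof. by rewrite /Vk dsc_iterD /= hornerD mulrDr (dsc_iter2 k m2 m1). Qed.

Lemma dsc_equiv m1 q1 m2 q2 : m1 * q2 = m2 * q1 ->
  (dsc (m1, q1)).1 * (dsc (m2, q2)).2 = (dsc (m2, q2)).1 * (dsc (m1, q1)).2.
Proof.
move=> E; have E' := congr1 deriv E; rewrite !derivM in E'.
move/eqP: E; rewrite -subr_eq0 => /eqP E.
move/eqP: E'; rewrite -subr_eq0 => /eqP E'.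
rewrite /dsc /=; apply/eqP; rewrite -subr_eq0; apply/eqP.
set X := _ - _.
have -> : X = q1 * q2 * (m1^`() * q2 + m1 * q2^`() - (m2^`() * q1 + m2 * q1^`()))
   - (q1^`() * q2 + q1 * q2^`()) * (m1 * q2 - m2 * q1) by rewrite /X; ring.
by rewrite E E'; ring.
Qed.

Lemma Vk_equiv k m1 q1 m2 q2 x : m1 * q2 = m2 * q1 -> q1.[x] != 0 -> q2.[x] != 0 ->
  Vk k m1 q1 x = Vk k m2 q2 x.
Proof.
rewrite /Vk; elim: k m1 q1 m2 q2 => [|k IH] m1 q1 m2 q2 E h1 h2.
  rewrite /=; have := congr1 (horner^~ x) E; rewrite !hornerM => E2.
  have -> : m1.[x] = m2.[x] * q1.[x] / q2.[x] by rewrite -E2 mulfK.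
  by field; apply/andP.
rewrite !iterSr; apply: IH.
- exact: dsc_equiv.
- by rewrite /= hornerM mulf_neq0.
- by rewrite /= hornerM mulf_neq0.
Qed.

Lemma Vk_poly k m x : Vk k m 1 x = m^`(k).[x].
Proof.
rewrite /Vk; have -> : iter k dsc (m, 1) = (m^`(k), 1).
  elim: k => //= k ->; rewrite /dsc /= derivC mul0r subr0 mul1r expr1n.
  by rewrite ?derivnS.
by rewrite /= hornerC invr1 mul1r.
Qed.

Lemma dsc_iter_dvd k m q x : ('X - x%:P) ^+ k.+1 %| m ->
  ('X - x%:P) %| (iter k dsc (m, q)).1.
Proof.
elim: k m q => [|k IH] m q hd; first by rewrite expr1 in hd.
rewrite iterSr; apply: IH; rewrite /dsc /=.
case/dvdpP: hd => r ->; rewrite derivM deriv_exp derivXsubC mul1r.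
apply: dvdp_sub; last first.
  by apply: dvdp_mull; apply: dvdp_mull; apply: dvdp_exp2l.
apply: dvdp_mull; apply: dvdp_add.
  by apply: dvdp_mull; apply: dvdp_exp2l.
by apply: dvdp_mull; rewrite -mulr_natl; apply: dvdp_mull; rewrite /= dvdpp.
Qed.

Lemma Vk_vanish k m q x : ('X - x%:P) ^+ k.+1 %| m -> Vk k m q x = 0.
Proof.
move=> hd; have /polyXsubCP h : ('X - x%:P) %| (iter k dsc (m, q)).1 by apply: dsc_iter_dvd.
by rewrite /Vk h mulr0.
Qed.

Lemma derivn_XsubC_exp (c : C) j k :
  (('X - c%:P) ^+ j)^`(k) = ('X - c%:P) ^+ (j - k) *+ j ^_ k.
Proof.
elim: k => [|k IH]; first by rewrite derivn0 subn0 ffactn0 mulr1n.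
rewrite derivnS IH derivMn deriv_exp derivXsubC mul1r ffactnSr mulrnA.
by rewrite subnS -!mulrnA mulnC.
Qed.

Lemma derivn_XsubC_exp_at (c : C) j k :
  (('X - c%:P) ^+ j)^`(k).[c] = (j == k)%:R * (k`!)%:R.
Proof.
rewrite derivn_XsubC_exp hornerMn horner_exp hornerD hornerN hornerX hornerC subrr.

case: (ltngtP j k) => h.
- by rewrite ffact_small ?mulr0n // mul0r.
- by rewrite expr0n subn_eq0 leqNgt h /= mul0rn mul0r.
- by rewrite h subnn expr0 ffactnn mul1r.
Qed.
End Scalar.
Arguments dsc {C}.
Arguments Vk {C}.

Section Proj.
Variables (C : fieldType) (n' m : nat) (A : 'M[C]_n'.+1) (lam : 'I_m -> C) (ns : 'I_m -> nat).
Hypothesis lam_inj : injective lam.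
Hypothesis hchar : char_poly A = \prod_(j < m) ('X - (lam j)%:P) ^+ ns j.

Definition pj j := ('X - (lam j)%:P) ^+ ns j.
Definition qj j := \prod_(k < m | k != j) pj k.

Lemma pq j : pj j * qj j = char_poly A.
Proof. by rewrite hchar (bigD1 j). Qed.

Lemma cop_pp j k : k != j -> coprimep (pj j) (pj k).
Proof.
move=> kj; apply/coprimep_expl/coprimep_expr/coprimep_XsubC2.
by rewrite subr_eq0 (inj_eq lam_inj).
Qed.

Lemma cop_pq j : coprimep (pj j) (qj j).
Proof.
apply: (big_ind (coprimep (pj j))); first exact: coprimep1.
  by move=> x y hx hy; rewrite coprimepMr hx hy.
exact: cop_pp.
Qed.

Lemma dvd_pq j k : k != j -> pj j %| qj k.
Proof. by move=> kj; rewrite /qj (bigD1 j) 1?eq_sym //= dvdp_mulIl. Qed.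

Lemma prod_dvd g : (forall j, pj j %| g) -> char_poly A %| g.
Proof.
move=> H; rewrite hchar.
have: forall r : seq 'I_m, uniq r -> \prod_(j <- r) pj j %| g.
  elim => [|j r IH] /=; first by rewrite big_nil dvd1p.
  move/andP=> [jr ur]; rewrite big_cons Gauss_dvdp ?H ?IH //.
  rewrite big_seq; apply: (big_ind (coprimep (pj j))); first exact: coprimep1.
    by move=> x y hx hy; rewrite coprimepMr hx hy.
  move=> k kr; apply: cop_pp; apply: contraNneq jr => <-; exact: kr.
by move/(_ (index_enum _) (index_enum_uniq _)).
Qed.

Lemma hpj j : horner_mx A (pj j) = (A - (lam j)%:M) ^+ ns j.
Proof. by rewrite rmorphXn rmorphB /= horner_mx_X horner_mx_C. Qed.

Lemma proj_poly i P : is_spectral_proj A lam ns i P ->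
  exists a b, a * pj i + b * qj i = 1 /\ P = horner_mx A (b * qj i).
Proof.
move=> [hP1 hP2].
have: forall j, exists u : {poly C} * {poly C}, u.1 * pj j + u.2 * qj j = 1.
  by move=> j; apply/Bezout_eq1_coprimepP/cop_pq.
case/fin_all_exists => u hu.
set s := \sum_j (u j).2 * qj j.
have hs : horner_mx A s = 1.
  have: char_poly A %| s - 1.
    apply: prod_dvd => j; rewrite /s (bigD1 j) //=.
    have -> : (u j).2 * qj j = 1 - (u j).1 * pj j by rewrite -(hu j); ring.
    set S := \sum_(k | _) _.
    have -> : 1 - (u j).1 * pj j + S - 1 = S - (u j).1 * pj j by ring.
    apply: dvdp_sub; last by apply: dvdp_mull; exact: dvdpp.
    apply: (big_ind (dvdp (pj j))); [exact: dvdp0 | exact: dvdp_add |].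
    by move=> k kj; apply: dvdp_mull; apply: dvd_pq.
  case/dvdpP => r hr; have -> : s = r * char_poly A + 1 by rewrite -hr subrK.
  by rewrite rmorphD rmorphM /= Cayley_Hamilton mulr0 add0r rmorph1.
exists (u i).1, (u i).2; split => //.
have hker : forall j v, in_ker_pow A (lam j) (ns j) (horner_mx A ((u j).2 * qj j) *m v).
  move=> j v; rewrite /in_ker_pow mulmxA -hpj.
  have -> : horner_mx A (pj j) *m horner_mx A ((u j).2 * qj j) = 0.
    by rewrite mulmxE -rmorphM /= mulrCA pq rmorphM /= Cayley_Hamilton mulr0.
  by rewrite mul0mx.
suff hv: forall v : 'cV_n'.+1, P *m v = horner_mx A ((u i).2 * qj i) *m v.
  apply/matrixP => a b.
  by have := hv (delta_mx b 0); rewrite -!colE => /matrixP /(_ a 0); rewrite !mxE.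
move=> v; rewrite -{1}[v]mul1mx (_ : 1%:M = horner_mx A s); last by rewrite hs.
rewrite /s rmorph_sum /= mulmx_suml mulmx_sumr.
rewrite (bigD1 i) //= big1 ?addr0; first by apply: hP1; have h := hker i v; exact: h.
by move=> j ji; apply: hP2; [exact: ji | exact: hker].
Qed.
End Proj.

Lemma mx_iter (C : fieldType) n k (M : 'M[{poly C}]_n) q :
  iter k (@rat_mx_deriv C n) (M, q) =
  (\matrix_(a, b) (iter k dsc (M a b, q)).1, (iter k dsc (0, q)).2).
Proof.
elim: k => [|k IH]; first by congr (_, _); apply/matrixP => a b; rewrite mxE.
rewrite iterS IH /rat_mx_deriv /=; congr (_, _); apply/matrixP => a b.
by rewrite !mxE /= (dsc_iter2 k 0 (M a b)).
Qed.

Lemma mx_derivn_at (C : fieldType) n k (M : 'M[{poly C}]_n) q x a b :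
  rat_mx_derivn_at k M q x a b = Vk k (M a b) q x.
Proof.
by rewrite /rat_mx_derivn_at mx_iter /Vk !mxE /= (dsc_iter2 k 0 (M a b)).
Qed.

Lemma scalemx_inj (C : fieldType) n (c : {poly C}) (M1 M2 : 'M[{poly C}]_n) :
  c != 0 -> c *: M1 = c *: M2 -> M1 = M2.
Proof.
move=> hc /matrixP H; apply/matrixP => a b; have := H a b; rewrite !mxE.
exact: mulfI.
Qed.

Section Key.
Variables (C : fieldType) (n' : nat) (A : 'M[C]_n'.+1) (lam0 : C) (k0 : nat).
Variables (q : {poly C}) (P Y : 'M[C]_n'.+1).
Hypothesis hpq : char_poly A = ('X - lam0%:P) ^+ k0 * q.
Hypothesis hq : q.[lam0] != 0.
Hypothesis F1 : (A - lam0%:M) ^+ k0 * P = 0.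
Hypothesis F2 : 1 - P = (A - lam0%:M) ^+ k0 * Y.

Lemma key k : (k < k0)%N -> forall a b,
  rat_mx_derivn_at k (\adj (char_poly_mx A)) q lam0 a b =
  ((A - lam0%:M) ^+ (k0.-1 - k) * P) a b * (k`!)%:R.
Proof.
move=> hk a b.
set X1 := 'X - lam0%:P. set Nm := A - lam0%:M. set Z := char_poly_mx A.
set B := \adj Z.
pose Pt := map_mx polyC P.
pose Q := \sum_(l < k0) X1 ^+ (k0.-1 - l) *: map_mx polyC (Nm ^+ l * P).
have hZ : Z = X1%:M - map_mx polyC Nm.
  apply/matrixP => a' b'; rewrite /Z /char_poly_mx /Nm /X1 !mxE.
  case: (a' == b'); rewrite /= ?mulr1n ?mulr0n ?polyCB ?subr0 ?polyC0 ?subr0; ring.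
pose f l := X1 ^+ (k0 - l) *: map_mx polyC (Nm ^+ l * P).
have hZQ : Z * Q = X1 ^+ k0 *: Pt.
  rewrite mulr_sumr.
  rewrite (eq_bigr (fun l : 'I_k0 => f l - f l.+1)); last first.
    move=> l _; have hl := ltn_ord l.
    rewrite -scalerAr hZ mulrBl -[X1%:M * _]/(X1%:M *m _) mul_scalar_mx.
    rewrite -[map_mx _ Nm * _]/(map_mx _ Nm *m _) -map_mxM -[Nm *m _]/(Nm * _).
    rewrite mulrA -exprS.
    rewrite scalerBr scalerA -exprSr /f.
    have -> : ((k0.-1 - l).+1 = k0 - l)%N by lia.
    by have -> : (k0.-1 - l = k0 - l.+1)%N by lia.
  rewrite -(big_mkord xpredT (fun l => f l - f l.+1)).
  have -> : \sum_(0 <= l < k0) (f l - f l.+1) = - \sum_(0 <= l < k0) (f l.+1 - f l).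
    by rewrite -sumrN; apply: eq_bigr => l _; rewrite opprB.
  rewrite telescope_sumr // opprB /f subnn subn0 F1 raddf0 scaler0 subr0.
  by rewrite expr0 mul1r.
have hBZ : B * Z = (char_poly A)%:M by rewrite -mulmxE mul_adj_mx.
have hX1 : X1 ^+ k0 != 0 by rewrite expf_neq0 // polyXsubC_eq0.
have hQ : q *: Q = B * Pt.
  apply: (scalemx_inj hX1); rewrite scalerA -hpq -mul_scalar_mx mulmxE -hBZ -mulrA hZQ.
  by rewrite scalerAr.
have hcomm : GRing.comm (X1%:M) (map_mx polyC Nm).
  by rewrite /GRing.comm -!mulmxE scalar_mxC.
have [S hS] : exists S, (X1%:M) ^+ k0 - (map_mx polyC Nm) ^+ k0 = Z * S.
  by rewrite subrXX_comm // -hZ; eexists.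
pose T := (B - q *: S) * map_mx polyC Y.
have hB1P : B * (1 - Pt) = X1 ^+ k0 *: T.
  have -> : 1 - Pt = map_mx polyC (1 - P) by rewrite raddfB /= rmorph1.
  rewrite F2 rmorphM rmorphXn /= mulrA.
  have -> : map_mx polyC Nm ^+ k0 = X1%:M ^+ k0 - Z * S by rewrite -hS opprB addrC subrK.
  rewrite mulrBr mulrA hBZ -rmorphXn /= -!mulmxE mul_mx_scalar mul_scalar_mx hpq.
  by rewrite -scalerA -scalerBr /T scalerAl.
have hBdec : B = q *: Q + X1 ^+ k0 *: T.
  by rewrite hQ -hB1P mulrBr mulr1 addrC subrK.
have hab : B a b = q * Q a b + X1 ^+ k0 * T a b by rewrite {1}hBdec !mxE.
rewrite mx_derivn_at hab Vk_add.
rewrite (@Vk_vanish _ k (X1 ^+ k0 * T a b)) ?addr0; last first.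
  by apply: dvdp_mulr; apply: dvdp_exp2l.
rewrite (@Vk_equiv _ k _ _ (Q a b) 1); last by rewrite hornerC oner_neq0.
- rewrite Vk_poly /Q summxE.
  rewrite raddf_sum horner_sum.
  under eq_bigr => l _ do rewrite !mxE mulrC mul_polyC /= derivnZ hornerZ derivn_XsubC_exp_at.
  have hl0 : (k0.-1 - k < k0)%N by lia.
  rewrite (bigD1 (Ordinal hl0)) //= [X in _ + X]big1 ?addr0.
    rewrite (_ : (k0.-1 - (k0.-1 - k) = k)%N) ?eqxx ?mul1r; last by lia.
    by rewrite [in RHS]mxE.
  move=> l hl; rewrite (_ : (k0.-1 - l == k)%N = false) ?mul0r ?mulr0 //.
  apply/negbTE; apply: contra hl => /eqP hl'; apply/eqP/val_inj => /=.
  have := ltn_ord l; lia.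
- by rewrite mulr1 mulrC.
- exact: hq.
Qed.
End Key.

Unset Implicit Arguments.
Set Strict Implicit.

Theorem theorem5 (R : realType) (n m : nat) (A : 'M[R[i]]_n)
    (lam : 'I_m -> R[i]) (ns : 'I_m -> nat)
    (lam_inj : injective lam) (ns_pos : forall j, (0 < ns j)%N)
    (hchar : char_poly A = \prod_(j < m) ('X - (lam j)%:P) ^+ ns j)
    (i : 'I_m) (P : 'M[R[i]]_n)
    (hP : is_spectral_proj A lam ns i P) :
  let B := \adj (char_poly_mx A) in
  let q := \prod_(j < m | j != i) ('X - (lam j)%:P) ^+ ns j in
  let N := (A - (lam i)%:M) *m P in
  P = ((ns i).-1)`!%:R^-1 *: rat_mx_derivn_at (ns i).-1 B q (lam i) /\
  ((2 <= ns i)%N ->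
     N *m P = (ns i - 2)`!%:R^-1 *: rat_mx_derivn_at (ns i - 2) B q (lam i)).
Proof.
move: A P hchar hP; case: n => [|n'] A P hchar hP B q N.
  by split => [|_]; apply/matrixP => -[].
have [a [b [hab hPe]]] := proj_poly lam_inj hchar hP.
have hpq : char_poly A = ('X - (lam i)%:P) ^+ ns i * q := esym (pq hchar i).
have hq : q.[lam i] != 0.
  rewrite horner_prod; apply/prodf_neq0 => j ji.
  by rewrite horner_exp hornerXsubC expf_neq0 // subr_eq0 (inj_eq lam_inj) eq_sym.
have F1 : (A - (lam i)%:M) ^+ ns i * P = 0.
  by rewrite hPe -hpj -rmorphM /= mulrCA (pq hchar) rmorphM /= Cayley_Hamilton mulr0.
have F2 : 1 - P = (A - (lam i)%:M) ^+ ns i * horner_mx A a.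
  rewrite hPe -hpj -rmorphM -(rmorph1 (horner_mx A)) -rmorphB; congr (horner_mx A _).
  by rewrite -hab; ring.
have F3 : P * P = P.
  have e : b * qj lam ns i * (b * qj lam ns i) = b * qj lam ns i
     - a * b * (pj lam ns i * qj lam ns i)
     + b * qj lam ns i * (a * pj lam ns i + b * qj lam ns i - 1) by ring.
  rewrite hab subrr mulr0 addr0 (pq hchar) in e.
  by rewrite hPe -rmorphM e rmorphB /= [horner_mx A (_ * char_poly A)]rmorphM /= Cayley_Hamilton mulr0 subr0.
have hk := key hpq hq F1 F2.
have hfact : forall k, (k`!)%:R != 0 :> R[i] by move=> k; rewrite pnatr_eq0 -lt0n fact_gt0.
split.
  apply/matrixP => x y; rewrite mxE hk; last by rewrite ltn_predL.
  by rewrite subnn expr0 mul1r mulrCA mulVf ?mulr1.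
move=> h2; apply/matrixP => x y; rewrite [in RHS]mxE hk; last by have := ns_pos i; lia.
rewrite (_ : ((ns i).-1 - (ns i - 2) = 1)%N); last by lia.
rewrite /N -mulmxA (_ : P *m P = P) // expr1.
by rewrite mulrCA mulVf ?mulr1.
Qed.
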